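(* Let $G$ be a connected graph (finite, simple, undirected) together with a partial proper $2$-coloring of its vertices, i.e.\ an assignment of one of two colors to some (possibly none, possibly all) of the vertices of $G$ such that no two adjacent colored vertices receive the same color. Then this partial $2$-coloring can be extended to a total proper $2$-coloring of $V(G)$ (an assignment of one of the two colors to every vertex, agreeing with the given colors on the precolored vertices, such that adjacent vertices receive distinct colors) if and only if all of the following conditions hold: (i) there is no even induced path of $G$ whose only colored vertices are its two endpoints and these endpoints are colored with distinct colors; (ii) there is no odd induced path of $G$ whose only colored vertices are its two endpoints and these endpoints are colored with the same color; (iii) there is no induced odd cycle of $G$ all of whose vertices are uncolored; (iv) there is no induced odd cycle of $G$ with exactly one colored vertex; (v) there is no induced odd cycle of $G$ with exactly two colored vertices, these two vertices being consecutive on the cycle.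
   Context: The length of a path or cycle is its number of edges; a path or cycle is odd or even according to the parity of its length. A path or cycle is induced if no edge of $G$ joins two non-consecutive vertices of it. *)

(* Defs.v *)
From mathcomp Require Import all_boot.
Set Implicit Arguments. Unset Strict Implicit. Unset Printing Implicit Defensive.

Section Graphs.
Variable T : finType.

Definition simple_graph (e : rel T) : Prop := irreflexive e /\ symmetric e.

Definition connected_graph (e : rel T) : Prop := forall x y : T, connect e x y.

(* partial 2-coloring: None = uncolored, Some b = colored with colour b *)
Definition colored (c : T -> option bool) (x : T) : bool := c x != None.

Definition proper_partial_coloring (e : rel T) (c : T -> option bool) : Prop :=
  forall x y a b, e x y -> c x = Some a -> c y = Some b -> a != b.

Definition extends_to_proper (e : rel T) (c : T -> option bool) : Prop :=
  exists f : T -> bool,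
    (forall x b, c x = Some b -> f x = b) /\ (forall x y, e x y -> f x != f y).

(* induced path with vertex sequence p (length = size p - 1 edges) *)
Definition induced_path (e : rel T) (p : seq T) : Prop :=
  0 < size p /\ uniq p /\
  forall x0 i j, i < size p -> j < size p ->
    e (nth x0 p i) (nth x0 p j) = (j == i.+1) || (i == j.+1).

(* induced cycle with vertex sequence p (cyclic order), length = size p *)
Definition induced_cycle (e : rel T) (p : seq T) : Prop :=
  3 <= size p /\ uniq p /\
  forall x0 i j, i < size p -> j < size p ->
    e (nth x0 p i) (nth x0 p j) =
      (j == i.+1 %% size p) || (i == j.+1 %% size p).

Definition only_ends_colored (c : T -> option bool) (p : seq T) : Prop :=
  forall x0 k, k < size p ->
    colored c (nth x0 p k) = (k == 0) || (k == (size p).-1).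

Definition cond_i (e : rel T) (c : T -> option bool) : Prop :=
  ~ exists (p : seq T) (x0 : T) (a b : bool),
      [/\ induced_path e p, ~~ odd (size p).-1, only_ends_colored c p,
          c (head x0 p) = Some a & c (last x0 p) = Some b] /\ a != b.

Definition cond_ii (e : rel T) (c : T -> option bool) : Prop :=
  ~ exists (p : seq T) (x0 : T) (a b : bool),
      [/\ induced_path e p, odd (size p).-1, only_ends_colored c p,
          c (head x0 p) = Some a & c (last x0 p) = Some b] /\ a = b.

Definition cond_iii (e : rel T) (c : T -> option bool) : Prop :=
  ~ exists p : seq T,
      [/\ induced_cycle e p, odd (size p) & count (colored c) p = 0].

Definition cond_iv (e : rel T) (c : T -> option bool) : Prop :=
  ~ exists p : seq T,
      [/\ induced_cycle e p, odd (size p) & count (colored c) p = 1].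

Definition cond_v (e : rel T) (c : T -> option bool) : Prop :=
  ~ exists (p : seq T) (x0 : T) (i : nat),
      [/\ induced_cycle e p, odd (size p), count (colored c) p = 2 & i < size p] /\
      colored c (nth x0 p i) /\ colored c (nth x0 p (i.+1 %% size p)).

End Graphs.

(* Main.v *)
Require Import Defs.
From mathcomp Require Import all_boot zify.
From Stdlib Require Import ClassicalEpsilon.
Set Implicit Arguments. Unset Strict Implicit. Unset Printing Implicit Defensive.

Section Main.
Variables (T : finType) (e : rel T) (c : T -> option bool).
Hypothesis eirr : irreflexive e.
Hypothesis esym : symmetric e.

Definition U (x : T) : bool := c x == None.
Definition walk k (v : nat -> T) := forall i, i < k -> e (v i) (v i.+1).

Lemma walk_skip k v i s : walk k v -> i + s < k -> e (v i) (v (i.+1 + s)) ->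
  walk (k - s) (fun t => if t <= i then v t else v (t + s)).
Proof.
move=> W H E t Ht /=.
have [ti|ti] := leqP t i.
  have [ti'|ti'] := leqP t.+1 i; first by apply: W; lia.
  by have -> : t = i by lia.
have -> : (t.+1 <= i) = false by lia.
rewrite addSn; apply: W; lia.
Qed.

Lemma walk_sub k v i j : walk k v -> i <= j -> j <= k ->
  walk (j - i) (fun t => v (t + i)).
Proof. by move=> W ij jk t Ht; rewrite addSn; apply: W; lia. Qed.

Lemma walk_close m u : walk m u -> e (u m) (u 0) ->
  walk m.+1 (fun t => if t <= m then u t else u 0).
Proof.
move=> W E t Ht /=; have -> : t <= m by lia.
have [tm|tm] := leqP t.+1 m; first by apply: W.
by have -> : t = m by lia.
Qed.

Lemma walk_preclose m u : walk m u -> e (u m) (u 0) ->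
  walk m.+1 (fun t => if t == 0 then u m else u t.-1).
Proof.
move=> W E [|t] Ht /=; first by [].
by apply: W; lia.
Qed.

Lemma walk_cat k1 k2 v1 v2 : walk k1 v1 -> walk k2 v2 -> v1 k1 = v2 0 ->
  walk (k1 + k2) (fun t => if t <= k1 then v1 t else v2 (t - k1)).
Proof.
move=> W1 W2 E t Ht /=.
have [tk|tk] := leqP t.+1 k1.
  by rewrite (ltnW tk); apply: W1.
have -> : (t <= k1) = (t == k1) by lia.
case: eqP => [->|ne].
  by rewrite subSnn E; apply: W2; lia.
have -> : t.+1 - k1 = (t - k1).+1 by lia.
apply: W2; lia.
Qed.

Lemma walk_rev k v : walk k v -> walk k (fun t => v (k - t)).
Proof.
move=> W t Ht /=; rewrite esym.
have -> : k - t = (k - t.+1).+1 by lia.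
apply: W; lia.
Qed.

Lemma walk_ext k v y : walk k v -> e (v k) y ->
  walk k.+1 (fun t => if t <= k then v t else y).
Proof.
move=> W E t Ht /=; have -> : t <= k by lia.
have [tm|tm] := leqP t.+1 k; first by apply: W.
by have -> : t = k by lia.
Qed.

Lemma modS i n : i < n -> i.+1 %% n = if i.+1 == n then 0 else i.+1.
Proof. move=> H; case: eqP => [->|ne]; [exact: modnn | apply: modn_small; lia]. Qed.

Lemma mk_cycle n v : 3 <= n -> walk n v -> v n = v 0 ->
  (forall i j, i < j -> j < n -> v i != v j) ->
  (forall i j, i < j -> j < n -> e (v i) (v j) -> j = i.+1 \/ (i = 0 /\ j = n.-1)) ->
  induced_cycle e (mkseq v n).
Proof.
move=> n3 W cl inj nch; split; first by rewrite size_mkseq.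
split.
  rewrite /mkseq map_inj_in_uniq ?iota_uniq // => i j; rewrite !mem_iota => Hi Hj eq.
  case: (ltngtP i j) => // H.
  - by move: (inj i j H ltac:(lia)); rewrite eq eqxx.
  - by move: (inj j i H ltac:(lia)); rewrite eq eqxx.
move=> x0 i j; rewrite size_mkseq => Hi Hj; rewrite !nth_mkseq //.
have side : forall i j, i < n -> j < n -> j == i.+1 %% n -> e (v i) (v j).
  move=> a b Ha Hb; rewrite modS //; case: (a.+1 =P n) => [E|ne] /eqP ->.
    by rewrite -cl -E; apply: W.
  by apply: W.
apply/idP/idP.
  move=> E; case: (ltngtP i j) => H.
  - case: (nch i j H Hj E) => [Ej|[Ei Ej]]; subst.
      by rewrite (modn_small Hj) eqxx.
    have -> : n.-1.+1 = n by lia.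
    by rewrite modnn eqxx orbT.
  - rewrite esym in E; case: (nch j i H Hi E) => [Ei|[Ej Ei]]; subst.
      by rewrite (modn_small Hi) eqxx orbT.
    have -> : n.-1.+1 = n by lia.
    by rewrite modnn eqxx.
  - by move: E; rewrite H eirr.
case/orP => H; first exact: side.
by rewrite esym; apply: side.
Qed.

Lemma mk_path n v : walk n v ->
  (forall i j, i < j -> j <= n -> v i != v j) ->
  (forall i j, i < j -> j <= n -> e (v i) (v j) -> j = i.+1) ->
  induced_path e (mkseq v n.+1).
Proof.
move=> W inj nch; split; first by rewrite size_mkseq.
split.
  rewrite /mkseq map_inj_in_uniq ?iota_uniq // => i j; rewrite !mem_iota => Hi Hj eq.
  case: (ltngtP i j) => // H.
  - by move: (inj i j H ltac:(lia)); rewrite eq eqxx.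
  - by move: (inj j i H ltac:(lia)); rewrite eq eqxx.
move=> x0 i j; rewrite size_mkseq => Hi Hj; rewrite !nth_mkseq //.
apply/idP/idP.
  move=> E; case: (ltngtP i j) => H.
  - by rewrite (nch i j H ltac:(lia) E) eqxx.
  - by rewrite esym in E; rewrite (nch j i H ltac:(lia) E) eqxx orbT.
  - by move: E; rewrite H eirr.
case/orP => /eqP E; subst; first by apply: W; lia.
by rewrite esym; apply: W; lia.
Qed.


Definition badA k v := [/\ walk k v, forall i, i <= k -> U (v i), v k = v 0 & odd k].
Definition badB k v := [/\ walk k v, forall i, 0 < i -> i < k -> U (v i) &
   exists a b, [/\ c (v 0) = Some a, c (v k) = Some b & (a == b) = odd k]].

Definition IHyp k := forall k' v', k' < k -> ~ badA k' v' /\ ~ badB k' v'.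

Lemma stepA k v : IHyp k -> cond_iii e c -> ~ badA k v.
Proof.
move=> IH C3 [W HU cl ok].
have k3 : 3 <= k.
  case: k IH W HU cl ok => [|[|[|k]]] // IH W HU cl _.
  by move: (W 0 isT); rewrite cl eirr.
have inj : forall i j, i < j -> j < k -> v i != v j.
  move=> i j ij jk; apply/eqP => E.
  have W1 := walk_sub W (ltnW ij) (ltnW jk).
  have W2 := @walk_skip k v i (j - i) W ltac:(lia).
  have E2 : i.+1 + (j - i) = j.+1 by lia.
  rewrite E2 in W2.
  case: (boolP (odd (j - i))) => oj.
    apply: (proj1 (IH (j - i) (fun t => v (t + i)) ltac:(lia))); split => //.
    - by move=> t Ht /=; apply: HU; lia.
    - by rewrite subnK ?(ltnW ij) // add0n.
  apply: (proj1 (IH (k - (j - i)) (fun t => if t <= i then v t else v (t + (j - i))) ltac:(lia))); split.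
  - by apply: W2; rewrite E; apply: W.
  - by move=> t Ht /=; case: ifP => Hif; apply: HU; lia.
  - have -> : (k - (j - i) <= i) = false by lia.
    by rewrite subnK ?cl //; lia.
  - by rewrite oddB ?ok ?(negbTE oj) //; lia.
have nch : forall i j, i < j -> j < k -> e (v i) (v j) -> j = i.+1 \/ (i = 0 /\ j = k.-1).
  move=> i j ij jk E.
  case: (j =P i.+1) => [|nj]; first by left.
  case: (boolP ((i == 0) && (j == k.-1))) => [/andP[/eqP ? /eqP ?]|nn]; first by right.
  exfalso.
  have W1 := walk_close (walk_sub W (ltnW ij) (ltnW jk)).
  rewrite subnK ?(ltnW ij) // add0n esym in W1; have {}W1 := W1 E.
  have W2 := @walk_skip k v i (j - i - 1) W ltac:(lia).
  have E' : i.+1 + (j - i - 1) = j by lia.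
  rewrite E' in W2; have {}W2 := W2 E.
  case: (boolP (odd (j - i).+1)) => oj.
    apply: (proj1 (IH (j - i).+1 (fun t => if t <= j - i then v (t + i) else v i) ltac:(lia))); split => //.
    - by move=> t Ht /=; case: ifP => Hif; apply: HU; lia.
    - by have -> : ((j - i).+1 <= j - i) = false by lia.
  apply: (proj1 (IH (k - (j - i - 1)) (fun t => if t <= i then v t else v (t + (j - i - 1))) ltac:(lia))); split => //.
  - by move=> t Ht /=; case: ifP => Hif; apply: HU; lia.
  - have -> : (k - (j - i - 1) <= i) = false by lia.
    by rewrite subnK ?cl //; lia.
  - rewrite oddS negbK in oj.
    rewrite oddB ?ok; last by lia.
    by rewrite oddB ?oj //; lia.
apply: C3; exists (mkseq v k); split.
- exact: mk_cycle.
- by rewrite size_mkseq.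
- rewrite /mkseq count_map; apply/eqP; rewrite eqn0Ngt -has_count; apply/hasPn => i.
  by rewrite mem_iota => Hi /=; rewrite /colored negbK; apply: HU; lia.
Qed.


Lemma count_mk0 n (f : nat -> T) : (forall i, i < n -> U (f i)) ->
  count (colored c) (mkseq f n) = 0.
Proof.
move=> HU; rewrite /mkseq count_map; apply/eqP; rewrite eqn0Ngt -has_count; apply/hasPn => i.
by rewrite mem_iota => Hi /=; rewrite /colored negbK; apply: HU; lia.
Qed.

Lemma count_mk1 n (f : nat -> T) : 0 < n -> ~~ U (f 0) ->
  (forall i, 0 < i -> i < n -> U (f i)) -> count (colored c) (mkseq f n) = 1.
Proof.
case: n => [|n] // _ H0 HU; rewrite /mkseq /= /colored H0 add1n; congr S.
rewrite count_map; apply/eqP; rewrite eqn0Ngt -has_count; apply/hasPn => i.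
by rewrite mem_iota => Hi /=; rewrite negbK; apply: HU; lia.
Qed.

Lemma stepBc k v : IHyp k -> cond_iv e c -> v k = v 0 -> ~ badB k v.
Proof.
move=> IH C4 cl [W HU [a [b [ca cb ab]]]].
rewrite cl ca in cb; case: cb => ?; subst b; rewrite eqxx in ab.
have k3 : 3 <= k.
  case: k IH W HU cl ab => [|[|[|k]]] // IH W HU cl _.
  by move: (W 0 isT); rewrite cl eirr.
have nU0 : ~~ U (v 0) by rewrite /U ca.
have inj : forall i j, i < j -> j < k -> v i != v j.
  move=> i j ij jk; apply/eqP => E.
  case: (posnP i) => [i0|ip].
    by subst i; move: (HU j ltac:(lia) jk); rewrite -E (negbTE nU0).
  have W1 := walk_sub W (ltnW ij) (ltnW jk).
  have W2 := @walk_skip k v i (j - i) W ltac:(lia).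
  have E2 : i.+1 + (j - i) = j.+1 by lia.
  rewrite E2 in W2.
  case: (boolP (odd (j - i))) => oj.
    apply: (proj1 (IH (j - i) (fun t => v (t + i)) ltac:(lia))); split => //.
    - by move=> t Ht /=; apply: HU; lia.
    - by rewrite subnK ?(ltnW ij) // add0n.
  apply: (proj2 (IH (k - (j - i)) (fun t => if t <= i then v t else v (t + (j - i))) ltac:(lia))); split.
  - by apply: W2; rewrite E; apply: W.
  - by move=> t Ht1 Ht2 /=; case: ifP => Hif; apply: HU; lia.
  - exists a, a; split => //=.
    + have -> : (k - (j - i) <= i) = false by lia.
      by rewrite subnK ?cl //; lia.
    + by rewrite eqxx oddB -?ab ?(negbTE oj) //; lia.
have nch : forall i j, i < j -> j < k -> e (v i) (v j) -> j = i.+1 \/ (i = 0 /\ j = k.-1).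
  move=> i j ij jk E.
  case: (j =P i.+1) => [|nj]; first by left.
  case: (boolP ((i == 0) && (j == k.-1))) => [/andP[/eqP ? /eqP ?]|nn]; first by right.
  exfalso.
  have W1 := walk_close (walk_sub W (ltnW ij) (ltnW jk)).
  rewrite subnK ?(ltnW ij) // add0n esym in W1; have {}W1 := W1 E.
  have W2 := @walk_skip k v i (j - i - 1) W ltac:(lia).
  have E' : i.+1 + (j - i - 1) = j by lia.
  rewrite E' in W2; have {}W2 := W2 E.
  case: (boolP (odd (j - i).+1)) => oj.
    case: (posnP i) => [i0|ip].
      subst i.
      apply: (proj2 (IH (j - 0).+1 (fun t => if t <= j - 0 then v (t + 0) else v 0) ltac:(lia))); split => //.
      - by move=> t Ht1 Ht2 /=; rewrite ifT; [apply: HU; lia | lia].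
      - exists a, a; split => //=.
        + have -> : ((j - 0).+1 <= j - 0) = false by lia.
          by [].
        + by rewrite eqxx.
    apply: (proj1 (IH (j - i).+1 (fun t => if t <= j - i then v (t + i) else v i) ltac:(lia))); split => //.
    - by move=> t Ht /=; case: ifP => Hif; apply: HU; lia.
    - by have -> : ((j - i).+1 <= j - i) = false by lia.
  apply: (proj2 (IH (k - (j - i - 1)) (fun t => if t <= i then v t else v (t + (j - i - 1))) ltac:(lia))); split => //.
  - by move=> t Ht1 Ht2 /=; case: ifP => Hif; apply: HU; lia.
  - exists a, a; split => //=.
    + have -> : (k - (j - i - 1) <= i) = false by lia.
      by rewrite subnK ?cl //; lia.
    + rewrite oddS negbK in oj.
      rewrite eqxx oddB -?ab; last by lia.
      by rewrite oddB ?oj //; lia.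
apply: C4; exists (mkseq v k); split.
- exact: mk_cycle.
- by rewrite size_mkseq -ab.
- apply: count_mk1; [lia | exact: nU0 | move=> i i0 ik; exact: HU].
Qed.


Lemma stepB k v : IHyp k -> (forall v', v' k = v' 0 -> ~ badB k v') ->
  proper_partial_coloring e c -> cond_v e c -> cond_i e c -> cond_ii e c -> ~ badB k v.
Proof.
move=> IH HBc cp C5 C1 C2 B.
have HBc' : forall k' v', k' <= k -> v' k' = v' 0 -> ~ badB k' v'.
  move=> k' v' kk cl'; case: (ltngtP k' k) kk => // [lt|eq] _.
    exact: (proj2 (IH k' v' lt)).
  by subst k'; exact: HBc cl'.
case: (v k =P v 0) => [cl|ncl]; first exact: (HBc v cl B).
case: B => W HU [a [b [ca cb ab]]].
have k2 : 2 <= k.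
  case: k IH HBc HBc' W HU cb ab ncl => [|[|k]] // IH HBc HBc' W HU cb ab ncl.
  by move: (cp _ _ _ _ (W 0 isT) ca cb); rewrite ab.
have nU0 : ~~ U (v 0) by rewrite /U ca.
have nUk : ~~ U (v k) by rewrite /U cb.
have inj : forall i j, i < j -> j <= k -> v i != v j.
  move=> i j ij jk; apply/eqP => E.
  case: (posnP i) => [i0|ip].
    subst i; case: (j =P k) => [jk'|jk'].
      by subst j; apply: ncl.
    by move: (HU j ltac:(lia) ltac:(lia)); rewrite -E (negbTE nU0).
  case: (j =P k) => [jk'|jk'].
    by subst j; move: (HU i ltac:(lia) ltac:(lia)); rewrite E (negbTE nUk).
  have W1 := walk_sub W (ltnW ij) jk.
  have W2 := @walk_skip k v i (j - i) W ltac:(lia).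
  have E2 : i.+1 + (j - i) = j.+1 by lia.
  rewrite E2 in W2.
  case: (boolP (odd (j - i))) => oj.
    apply: (proj1 (IH (j - i) (fun t => v (t + i)) ltac:(lia))); split => //.
    - by move=> t Ht /=; apply: HU; lia.
    - by rewrite subnK ?(ltnW ij) // add0n.
  apply: (proj2 (IH (k - (j - i)) (fun t => if t <= i then v t else v (t + (j - i))) ltac:(lia))); split.
  - by apply: W2; rewrite E; apply: W; lia.
  - by move=> t Ht1 Ht2 /=; case: ifP => Hif; apply: HU; lia.
  - exists a, b; split => //=.
    + have -> : (k - (j - i) <= i) = false by lia.
      by rewrite subnK //; lia.
    + by rewrite oddB -?ab ?(negbTE oj) ?addbF //; lia.
have nch : forall i j, i < j -> j <= k -> e (v i) (v j) -> j = i.+1 \/ (i = 0 /\ j = k).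
  move=> i j ij jk E.
  case: (j =P i.+1) => [|nj]; first by left.
  case: (boolP ((i == 0) && (j == k))) => [/andP[/eqP ? /eqP ?]|nn]; first by right.
  exfalso.
  have W2 := @walk_skip k v i (j - i - 1) W ltac:(lia).
  have E' : i.+1 + (j - i - 1) = j by lia.
  rewrite E' in W2; have {}W2 := W2 E.
  case: (boolP (odd (j - i))) => oj.
    apply: (proj2 (IH (k - (j - i - 1)) (fun t => if t <= i then v t else v (t + (j - i - 1))) ltac:(lia))); split => //.
    - by move=> t Ht1 Ht2 /=; case: ifP => Hif; apply: HU; lia.
    - exists a, b; split => //=.
      + have -> : (k - (j - i - 1) <= i) = false by lia.
        by rewrite subnK //; lia.
      + rewrite oddB; last by lia.
        by rewrite ab oddB ?oj ?addbF //; lia.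
  case: (posnP i) => [i0|ip].
    subst i.
    have W1 := walk_close (walk_sub W (ltnW ij) jk).
    rewrite subnK ?(ltnW ij) // add0n esym in W1; have {}W1 := W1 E.
    apply: (HBc' (j - 0).+1 (fun t => if t <= j - 0 then v (t + 0) else v 0) ltac:(lia)).
      by rewrite /= ifF; [rewrite addn0 | lia].
    split => //.
    - by move=> t Ht1 Ht2 /=; rewrite ifT; [apply: HU; lia | lia].
    - exists a, a; split => //=.
      + by rewrite ifF //; lia.
      + by rewrite eqxx (negbTE oj).
  case: (j =P k) => [jk'|jk'].
    subst j.
    have W1 := walk_preclose (walk_sub W (ltnW ij) (leqnn k)).
    rewrite subnK ?(ltnW ij) // add0n in W1; rewrite esym in E; have {}W1 := W1 E.
    apply: (HBc' (k - i).+1 (fun t => if t == 0 then v k else v (t.-1 + i)) ltac:(lia)).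
      by rewrite /= subnK //; lia.
    split => //.
    - by move=> t Ht1 Ht2 /=; rewrite ifF; [apply: HU; lia | lia].
    - exists b, b; split => //=.
      + by rewrite subnK //; lia.
      + by rewrite eqxx (negbTE oj).
  have W1 := walk_close (walk_sub W (ltnW ij) jk).
  rewrite subnK ?(ltnW ij) // add0n esym in W1; have {}W1 := W1 E.
  apply: (proj1 (IH (j - i).+1 (fun t => if t <= j - i then v (t + i) else v i) ltac:(lia))); split => //.
  - by move=> t Ht /=; case: ifP => Hif; apply: HU; lia.
  - by have -> : ((j - i).+1 <= j - i) = false by lia.
case: (boolP (e (v 0) (v k))) => E0.
  have nab := cp _ _ _ _ E0 ca cb.
  rewrite (negbTE nab) in ab.
  set v' := fun t => if t <= k then v t else v 0.
  have W' : walk k.+1 v'.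
    apply: walk_close => //; by rewrite esym.
  apply: C5; exists (mkseq v' k.+1), (v 0), k; split; last split.
  - split.
    + apply: mk_cycle => //.
      * by rewrite /v' /= ifF //; lia.
      * move=> i j ij jk; rewrite /v' !ifT; [exact: inj | lia | lia].
      * move=> i j ij jk; rewrite /v' !ifT; try lia.
        move/(nch i j ij ltac:(lia)) => [->|[-> ->]]; [by left | by right].
    + by rewrite size_mkseq /= -ab.
    + rewrite mkseqS -cats1 count_cat (@count_mk1 k) /=.
      * by rewrite /colored /v' leqnn cb.
      * lia.
      * by rewrite /v' /=.
      * by move=> i i0 ik; rewrite /v' ifT; [apply: HU | lia].
    + by rewrite size_mkseq.
  - by rewrite nth_mkseq // /colored /v' leqnn cb.
  - by rewrite size_mkseq modnn nth_mkseq // /colored /v' /= ca.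
have P : induced_path e (mkseq v k.+1).
  apply: mk_path => // i j ij jk E.
  case: (nch i j ij jk E) => [//|[ii jj]].
  by subst; rewrite E in E0.
have OE : only_ends_colored c (mkseq v k.+1).
  move=> x0 i; rewrite size_mkseq => Hi; rewrite nth_mkseq //= /colored.
  case: (posnP i) => [->|ip]; first by rewrite ca.
  case: (i =P k) => [->|ik]; first by rewrite cb.
  rewrite (eqP (HU i ip ltac:(lia))) /=; apply/eqP; lia.
have H0 : c (head (v 0) (mkseq v k.+1)) = Some a by [].
have Hk : c (last (v 0) (mkseq v k.+1)) = Some b.
  by rewrite -nth_last size_mkseq nth_mkseq.
case: (boolP (a == b)) ab => ab' ab.
  apply: C2; exists (mkseq v k.+1), (v 0), a, b; split; last exact/eqP.
  by split => //; rewrite size_mkseq /= -ab.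
apply: C1; exists (mkseq v k.+1), (v 0), a, b; split => //.
by split => //; rewrite size_mkseq /= -ab.
Qed.


Lemma no_bad : proper_partial_coloring e c -> cond_i e c -> cond_ii e c ->
  cond_iii e c -> cond_iv e c -> cond_v e c ->
  forall k v, ~ badA k v /\ ~ badB k v.
Proof.
move=> cp C1 C2 C3 C4 C5.
have H : forall n k, k < n -> forall v, ~ badA k v /\ ~ badB k v.
  elim=> [//|n IHn] k kn v.
  have IH : IHyp k := fun k' v' lt => IHn k' ltac:(lia) v'.
  split; first exact: stepA IH C3.
  apply: stepB => // v' cl; exact: stepBc IH C4 cl.
by move=> k v; apply: (H k.+1).
Qed.

Definition forced x b := exists k v a, [/\ walk k v, c (v 0) = Some a,
  forall i, 0 < i -> i <= k -> U (v i), v k = x & b = a (+) odd k].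
Definition e' : rel T := fun x y => [&& e x y, U x & U y].
Definition oddw x := exists k v, [/\ walk k v, forall i, i <= k -> U (v i),
  v 0 = root e' x, v k = x & odd k].
Definition dec (P : Prop) : bool := if excluded_middle_informative P then true else false.
Lemma decP P : reflect P (dec P).
Proof. by rewrite /dec; case: excluded_middle_informative => H; constructor. Qed.
Definition fext x := match c x with Some b => b | None =>
  if dec (exists b, forced x b) then dec (forced x true) else dec (oddw x) end.

Hypothesis NB : forall k v, ~ badA k v /\ ~ badB k v.

Lemma forced_uniq x b1 b2 : U x -> forced x b1 -> forced x b2 -> b1 = b2.
Proof.
move=> Ux [k1 [v1 [a1 [W1 c1 U1 e1 b1E]]]] [k2 [v2 [a2 [W2 c2 U2 e2 b2E]]]].
case: (b1 =P b2) => // ne; exfalso.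
have k1p : 0 < k1 by case: k1 {W1 U1 b1E} e1 => // e1; move: Ux; rewrite -e1 /U c1.
have k2p : 0 < k2 by case: k2 {W2 U2 b2E} e2 => // e2; move: Ux; rewrite -e2 /U c2.
have W := walk_cat W1 (walk_rev W2).
rewrite subn0 e1 e2 in W; have {}W := W erefl.
apply: (proj2 (NB (k1 + k2) (fun t => if t <= k1 then v1 t else v2 (k2 - (t - k1))))); split => //.
- by move=> t t0 tk /=; case: ifP => H; [apply: U1; lia | apply: U2; lia].
- exists a1, a2; split => //=.
  have -> : (k1 + k2 <= k1) = false by lia.
  by have -> : k2 - (k1 + k2 - k1) = 0 by lia.
- move: ne; rewrite b1E b2E oddD.
  by case: a1 c1 b1E; case: a2 c2 b2E; case: (odd k1); case: (odd k2).
Qed.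

Lemma forced_ext x y b : forced x b -> e x y -> U y -> forced y (~~ b).
Proof.
move=> [k [v [a [W c0 Ui ek bE]]]] E Uy.
exists k.+1, (fun t => if t <= k then v t else y), a; split => //.
- by apply: walk_ext => //; rewrite ek.
- by move=> t t0 tk /=; case: ifP => H //; apply: Ui.
- by rewrite /= ifF //; lia.
- by rewrite bE oddS; case: a c0 bE; case: (odd k).
Qed.

Lemma forced_edge x y a : c x = Some a -> e x y -> U y -> forced y (~~ a).
Proof.
move=> cx E Uy.
exists 1, (fun t => if t == 0 then x else y), a; split => //.
- by move=> [|t] //= _.
- by move=> [|[|t]].
- by rewrite addbT.
Qed.

Lemma fF x b : U x -> forced x b -> fext x = b.
Proof.
move=> Ux Fb; rewrite /fext (eqP Ux).
case: decP => [_|[]]; last by exists b.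
case: decP => [Ht|Hn]; first exact: forced_uniq Ux Ht Fb.
by case: b Fb => // Fb; case: Hn.
Qed.

Lemma fU x : U x -> ~ (exists b, forced x b) -> fext x = dec (oddw x).
Proof. by move=> Ux nF; rewrite /fext (eqP Ux); case: decP. Qed.

Lemma e'sym : symmetric e'.
Proof. by move=> a b; rewrite /e' esym; case: (e b a); rewrite //= andbC. Qed.

Lemma root_walk x : U x -> exists k v, [/\ walk k v, forall i, i <= k -> U (v i),
  v 0 = root e' x & v k = x].
Proof.
move=> Ux; have := connect_root e' x; case/connectP => p pth lp.
have Hp := pathP x pth.
exists (size p), (fun t => nth x (x :: p) (size p - t)); split.
- apply: walk_rev => t Ht /=; by case/and3P: (Hp t Ht).
- move=> i Hi /=; case: (size p - i) (leq_subr i (size p)) => [|j] Hj //=.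
  by case/and3P: (Hp j Hj).
- by rewrite subn0 -last_nth.
- by rewrite subnn.
Qed.

Lemma fext_proper0 x y : e x y -> U x -> fext x != fext y.
Proof.
move=> E Ux; case cy: (c y) => [b|].
  have Fx : forced x (~~ b) by apply: (forced_edge cy); rewrite // esym.
  by rewrite (fF Ux Fx) /fext cy; case: b {cy Fx}.
have Uy : U y by rewrite /U cy.
case: (classic (exists b, forced x b)) => [[b Fb]|nF].
  by rewrite (fF Ux Fb) (fF Uy (forced_ext Fb E Uy)); case: b {Fb}.
have nFy : ~ (exists b, forced y b).
  by case=> b Fb; apply: nF; exists (~~ b); apply: forced_ext Fb _ Ux; rewrite esym.
rewrite (fU Ux nF) (fU Uy nFy).
have rxy : root e' x = root e' y.
  apply/(rootP (sym_connect_sym e'sym)); apply: connect1; by rewrite /e' E Ux Uy.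
case: decP => [[k1 [v1 [W1 U1 r1 x1 o1]]]|no1].
  case: decP => [[k2 [v2 [W2 U2 r2 y2 o2]]]|//].
  exfalso.
  have W := walk_cat (walk_ext (y := y) W1 ltac:(by rewrite x1)) (walk_rev W2).
  rewrite /= ifF ?subn0 ?y2 in W; last by lia.
  have {}W := W erefl.
  apply: (proj1 (NB (k1.+1 + k2) (fun t => if t <= k1.+1 then (if t <= k1 then v1 t else y) else v2 (k2 - (t - k1.+1))))); split => //.
  - move=> t Ht /=; case: ifP => H; last by apply: U2; lia.
    by case: ifP => H'; [apply: U1 | rewrite -y2; apply: U2].
  - rewrite /= ifF; last by lia.
    have -> : k2 - (k1.+1 + k2 - k1.+1) = 0 by lia.
    by rewrite r2 r1 rxy.
  - by rewrite oddD /= o1 o2.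
have [k [v [W HU r0 xk]]] := root_walk Ux.
have ok : ~~ odd k by apply/negP => ok; apply: no1; exists k, v.
case: decP => // [] [].
exists k.+1, (fun t => if t <= k then v t else y); split.
- by apply: walk_ext => //; rewrite xk.
- by move=> t Ht /=; case: ifP => H //; apply: HU.
- by rewrite /= r0 rxy.
- by rewrite /= ifF //; lia.
- by rewrite /= (negbTE ok).
Qed.


Lemma fext_proper : proper_partial_coloring e c -> forall x y, e x y -> fext x != fext y.
Proof.
move=> cp x y E.
case Ux: (U x); first exact: fext_proper0.
case Uy: (U y); first by rewrite eq_sym; apply: fext_proper0; rewrite // esym.
move: Ux Uy; rewrite /U /fext.
case cx: (c x) => [a|] //; case cy: (c y) => [b|] // _ _.
exact: cp E cx cy.
Qed.

End Main.

Lemma alt (T : finType) (e : rel T) (f : T -> bool) (fp : forall x y, e x y -> f x != f y)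
  (p : seq T) x0 : (forall i, i.+1 < size p -> e (nth x0 p i) (nth x0 p i.+1)) ->
  forall i, i < size p -> f (nth x0 p i) = f (nth x0 p 0) (+) odd i.
Proof.
move=> H; elim=> [|i IH] Hi; first by rewrite addbF.
move: (fp _ _ (H i Hi)); rewrite IH; last by lia.
rewrite oddS; case: (f (nth x0 p i.+1)); case: (f (nth x0 p 0)); by case: (odd i).
Qed.

Lemma no_odd_cycle (T : finType) (e : rel T) (f : T -> bool) (fp : forall x y, e x y -> f x != f y)
  (p : seq T) : induced_cycle e p -> odd (size p) -> False.
Proof.
case: p => [|x0 q]; first by case.
set p := x0 :: q => [[s3 [_ adj]]] op.
have cons : forall i, i.+1 < size p -> e (nth x0 p i) (nth x0 p i.+1).
  move=> i Hi; rewrite adj; [|lia|lia].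
  by rewrite (modn_small Hi) eqxx.
have H := alt fp cons (i := (size p).-1) ltac:(lia).
have E : e (nth x0 p (size p).-1) (nth x0 p 0).
  rewrite adj; [|lia|lia].
  have -> : (size p).-1.+1 = size p by lia.
  by rewrite modnn eqxx.
move: (fp _ _ E); rewrite H.
have -> : odd (size p).-1 = false.
  by move: op; case: (size p) => //= n /negbTE.
by rewrite addbF eqxx.
Qed.

Theorem mainTheorem1 (T : finType) (e : rel T) (c : T -> option bool) :
  simple_graph e -> connected_graph e -> proper_partial_coloring e c ->
  (extends_to_proper e c <->
   [/\ cond_i e c, cond_ii e c, cond_iii e c, cond_iv e c & cond_v e c]).
Proof.
move=> [eirr esym] _ cp; split.
  move=> [f [fc fp]].
  have pathcons : forall p x0, induced_path e p ->
      f (last x0 p) = f (head x0 p) (+) odd (size p).-1.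
    move=> p x0 [s0 [_ adj]].
    have cons : forall i, i.+1 < size p -> e (nth x0 p i) (nth x0 p i.+1).
      by move=> i Hi; rewrite adj ?eqxx //; lia.
    rewrite -nth_last (alt fp cons (i := (size p).-1)); last by lia.
    by case: p {s0 adj cons}.
  split.
  - move=> [p [x0 [a [b [[P ev _ ha lb] ab]]]]].
    move: (pathcons p x0 P); rewrite (fc _ _ ha) (fc _ _ lb) (negbTE ev) addbF => E.
    by rewrite E eqxx in ab.
  - move=> [p [x0 [a [b [[P ev _ ha lb] ab]]]]].
    move: (pathcons p x0 P); rewrite (fc _ _ ha) (fc _ _ lb) ev ab.
    by case: b lb ab.
  - by move=> [p [C op _]]; apply: (no_odd_cycle fp C op).
  - by move=> [p [C op _]]; apply: (no_odd_cycle fp C op).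
  - by move=> [p [x0 [i [[C op _ _] _]]]]; apply: (no_odd_cycle fp C op).
case=> C1 C2 C3 C4 C5.
have NB := no_bad eirr esym cp C1 C2 C3 C4 C5.
exists (fext e c); split.
  by move=> x b cx; rewrite /fext cx.
exact: (fext_proper esym NB cp).
Qed.
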